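(* Let $A$ be a T-brace. (i) If $A$ is $\star$-hypercentral, then the additive group $A\star A$ is periodic. (ii) If $\beta$ is an ordinal and $a,b\in\zeta_\beta(\star,A)$, then $a\star b$ has finite order in $(A,+)$.
   Context: A (left) brace is a set $A$ with two operations $+$ and $\cdot$ such that $(A,+)$ is an abelian group, $(A,\cdot)$ is a group, and $a(b+c)=ab+ac-a$ for all $a,b,c\in A$. Put $a\star b=ab-a-b$; $A\star A$ is the subgroup of $(A,+)$ generated by all $x\star y$. A subbrace is a subset which is a subgroup of both $(A,+)$ and $(A,\cdot)$; a subbrace $L$ is an ideal if $a\star z, z\star a\in L$ for all $a\in A$, $z\in L$, and then the quotient brace $A/L$ is defined. $A$ is a T-brace if whenever $I$ is an ideal of $J$ and $J$ is an ideal of $A$, then $I$ is an ideal of $A$. The $\star$-center is $\zeta(\star,A)=\{a: a\star x=x\star a=0\ \forall x\}$; the upper $\star$-central series is $\zeta_0(\star,A)=0$, $\zeta_{\alpha+1}(\star,A)/\zeta_\alpha(\star,A)=\zeta(\star,A/\zeta_\alpha(\star,A))$, unions at limit ordinals, each term an ideal; its last term is $\zeta_\infty(\star,A)$, and $A$ is $\star$-hypercentral if $A=\zeta_\infty(\star,A)$. *)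

(* Defs.v *)
From HB Require Import structures.
From mathcomp Require Import all_boot all_algebra.
Set Implicit Arguments. Unset Strict Implicit. Unset Printing Implicit Defensive.
Import GRing.Theory.
Local Open Scope ring_scope.

(* A (left) brace: (V,+) is the abelian group of the zmodType V; the
   multiplicative group (V,.) is given by bmul/binv/bone. *)
Record brace (V : zmodType) := Brace {
  bmul : V -> V -> V;
  binv : V -> V;
  bone : V;
  bmulA : forall a b c, bmul a (bmul b c) = bmul (bmul a b) c;
  bmul1l : forall a, bmul bone a = a;
  bmul1r : forall a, bmul a bone = a;
  bmulVl : forall a, bmul (binv a) a = bone;
  bmulVr : forall a, bmul a (binv a) = bone;
  bdistr : forall a b c, bmul a (b + c) = bmul a b + bmul a c - a
}.

Section BraceDefs.
Variables (V : zmodType) (B : brace V).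

Definition bstar (a b : V) : V := bmul B a b - a - b.

Definition is_subbrace (S : V -> Prop) : Prop :=
  [/\ S 0, (forall x y, S x -> S y -> S (x - y)),
      S (bone B), (forall x y, S x -> S y -> S (bmul B x y))
    & (forall x, S x -> S (binv B x))].

Definition is_ideal_of (J I : V -> Prop) : Prop :=
  [/\ is_subbrace I, (forall x, I x -> J x)
    & (forall a z, J a -> I z -> I (bstar a z) /\ I (bstar z a))].

Definition is_ideal (I : V -> Prop) : Prop := is_ideal_of (fun _ => True) I.

Definition T_brace : Prop :=
  forall I J : V -> Prop, is_ideal_of J I -> is_ideal J -> is_ideal I.

Inductive in_star_star : V -> Prop :=
  | ss_gen x y : in_star_star (bstar x y)
  | ss_zero : in_star_star 0
  | ss_sub u v : in_star_star u -> in_star_star v -> in_star_star (u - v).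

(* preimage of the star-center of A/S: zeta_{alpha+1} from zeta_alpha = S *)
Definition star_center_over (S : V -> Prop) : V -> Prop :=
  fun a => forall x, S (bstar a x) /\ S (bstar x a).

(* The terms zeta_alpha(star,A) of the upper star-central series, for all
   ordinals alpha: the least class of subsets containing 0, closed under
   the successor step and under unions of arbitrary families of terms
   (this covers limit steps; the terms form a chain). *)
Inductive upper_star_term : (V -> Prop) -> Prop :=
  | ust_zero : upper_star_term (fun a => a = 0)
  | ust_succ S : upper_star_term S -> upper_star_term (star_center_over S)
  | ust_union (F : (V -> Prop) -> Prop) :
      (forall S, F S -> upper_star_term S) ->
      upper_star_term (fun a => exists2 S, F S & S a).

Definition star_hypercentral : Prop :=
  exists2 S, upper_star_term S & forall a, S a.

Definition finite_add_order (x : V) : Prop := exists2 n : nat, (0 < n)%N & x *+ n = 0.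

End BraceDefs.

(* Main.v *)
Require Import Defs.
From mathcomp Require Import all_boot all_algebra.
From Stdlib Require Import Classical.
From mathcomp Require Import zify.
Set Implicit Arguments. Unset Strict Implicit. Unset Printing Implicit Defensive.
Import GRing.Theory.
Local Open Scope ring_scope.

Section Basic.
Variables (V : zmodType) (B : brace V).
Local Notation mul := (bmul B).
Local Notation inv := (binv B).
Fact st_key : unit. Proof. by []. Qed.
Definition st (a b : V) := locked_with st_key (bstar B a b).
Lemma stU a b : st a b = bstar B a b.
Proof. by rewrite /st unlock. Qed.

Fact lam_key : unit. Proof. by []. Qed.
Definition lam (a b : V) := locked_with lam_key (mul a b - a).
Lemma lamU a b : lam a b = mul a b - a.
Proof. by rewrite /lam unlock. Qed.

Lemma mulE a b : mul a b = a + lam a b.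
Proof. by rewrite lamU addrC subrK. Qed.

Lemma lamD a b c : lam a (b + c) = lam a b + lam a c.
Proof. rewrite !lamU bdistr. rewrite -!addrA; congr (_ + _). rewrite addrC -!addrA. congr (_ + _). by rewrite addrC. Qed.

Lemma lam0 a : lam a 0 = 0.
Proof. have h := lamD a 0 0; rewrite addr0 in h.
by apply: (@addrI _ (lam a 0)); rewrite addr0 -h. Qed.

Lemma lamN a b : lam a (- b) = - lam a b.
Proof. by apply: (@addrI _ (lam a b)); rewrite -lamD !subrr lam0. Qed.

Lemma lamB a b c : lam a (b - c) = lam a b - lam a c.
Proof. by rewrite lamD lamN. Qed.

Lemma mulr0b a : mul a 0 = a.
Proof. by rewrite mulE lam0 addr0. Qed.

Lemma one0 : bone B = 0.
Proof. by rewrite -{1}(mulr0b (bone B)) bmul1l. Qed.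

Lemma mul0b a : mul 0 a = a.
Proof. by rewrite -one0 bmul1l. Qed.

Lemma lam0l b : lam 0 b = b.
Proof. by rewrite lamU mul0b subr0. Qed.

Lemma lamM a b c : lam (mul a b) c = lam a (lam b c).
Proof. rewrite [lam b c]lamU lamB !lamU -bmulA. by rewrite opprB addrA subrK. Qed.

Lemma lamK a c : lam (inv a) (lam a c) = c.
Proof. by rewrite -lamM bmulVl one0 lam0l. Qed.

Lemma lamKV a c : lam a (lam (inv a) c) = c.
Proof. by rewrite -lamM bmulVr one0 lam0l. Qed.

Lemma stE a b : st a b = lam a b - b.
Proof. by rewrite stU /bstar lamU. Qed.

Lemma lamE a b : lam a b = b + st a b.
Proof. by rewrite stE addrC subrK. Qed.

Lemma mulEs a b : mul a b = a + b + st a b.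
Proof. by rewrite mulE lamE addrA. Qed.

Lemma stD x u v : st x (u + v) = st x u + st x v.
Proof. rewrite !stE lamD opprD. rewrite -!addrA; congr (_ + _). by rewrite addrCA. Qed.

Lemma st0r x : st x 0 = 0.
Proof. by rewrite stE lam0 subr0. Qed.

Lemma st0l x : st 0 x = 0.
Proof. by rewrite stE lam0l subrr. Qed.

Lemma stN x u : st x (- u) = - st x u.
Proof. by apply: (@addrI _ (st x u)); rewrite -stD !subrr st0r. Qed.

Lemma stB x u v : st x (u - v) = st x u - st x v.
Proof. by rewrite stD stN. Qed.

Lemma stM x y g : st (mul x y) g = st x (st y g) + st y g + st x g.
Proof.
rewrite stE lamM [lam y g]lamE lamD [lam x g]lamE [lam x (st y g)]lamE.
rewrite addrC !addrA addNr add0r.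
by rewrite addrC [st x g + _]addrC addrA.
Qed.

Lemma stMn x u n : st x (u *+ n) = st x u *+ n.
Proof. elim: n => [|n IH]; first by rewrite !mulr0n st0r. by rewrite !mulrS stD IH. Qed.

Lemma stMz x u k : st x (u *~ k) = st x u *~ k.
Proof. case: k => n; first by rewrite -!pmulrn stMn.
by rewrite NegzE !mulrNz stN -!pmulrn stMn. Qed.

Lemma sumE u v : u + v = mul u (lam (inv u) v).
Proof. by rewrite mulE lamKV. Qed.

Lemma negE x : - x = lam x (inv x).
Proof. by apply: (@addrI _ x); rewrite subrr -mulE bmulVr one0. Qed.

Lemma invE x : inv x = - x - st x (inv x).
Proof. by rewrite negE lamE addrK. Qed.


Local Notation center := (star_center_over B).
Local Notation ust := (upper_star_term B).

Definition incl (S T : V -> Prop) := forall x, S x -> T x.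
Definition sclo (S : V -> Prop) := forall x g, S x -> S (st x g) /\ S (st g x).
Definition subg (S : V -> Prop) := forall x y, S x -> S y -> S (x - y).

Lemma centerE S a : center S a <-> (forall x, S (st a x) /\ S (st x a)).
Proof. rewrite /star_center_over; split => h x; first by rewrite !stU; apply: h.
by rewrite -!stU; apply: h. Qed.

Lemma bst0r x : bstar B x 0 = 0.
Proof. by rewrite -stU st0r. Qed.

Lemma center_mono S T : incl S T -> incl (center S) (center T).
Proof. by move=> h x hx g; case: (hx g) => h1 h2; split; apply: h. Qed.

Lemma center_empty S x : ~ S 0 -> ~ center S x.
Proof. by move=> h0 hx; case: (hx 0) => h1 _; rewrite bst0r in h1. Qed.

Lemma sclo_center S : sclo S -> sclo (center S).
Proof.
move=> hS x g /centerE hx; split; apply/centerE => y.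
- by case: (hx g) => h1 _; exact: hS.
- by case: (hx g) => _ h1; exact: hS.
Qed.

Lemma sclo_incl S : sclo S -> incl S (center S).
Proof. by move=> hS x hx; apply/centerE => y; exact: hS. Qed.

Lemma term_sclo S : ust S -> sclo S.
Proof.
elim => {S}.
- move=> x g ->; by rewrite st0l st0r.
- by move=> S _ IH; exact: sclo_center.
- move=> F _ IH x g [T FT Tx]. have [h1 h2] := IH T FT x g Tx.
  by split; exists T.
Qed.

Definition extreme S := forall T, ust T -> incl T S -> ~ incl S T -> incl (center T) S.

Lemma extremeA S : ust S -> extreme S -> forall T, ust T -> incl T S \/ incl (center S) T.
Proof.
move=> uS eS T uT; elim: uT => {T}.
- case: (classic (S 0)) => h0.
  + by left => x ->.
  + by right => x /(center_empty h0).
- move=> T uT [IH|IH].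
  + case: (classic (incl S T)) => hST.
    * by right; apply: center_mono.
    * by left; apply: eS.
  + right => x /IH hx. exact: (sclo_incl (term_sclo uT)).
- move=> F uF IH.
  case: (classic (exists2 T, F T & incl (center S) T)) => [[T FT hT]|hn].
  + by right => x /hT hx; exists T.
  + left => x [T FT Tx]. case: (IH T FT) => h; first exact: h.
    by exfalso; apply: hn; exists T.
Qed.

Lemma all_extreme S : ust S -> extreme S.
Proof.
elim => {S}.
- move=> T uT hT hn x hx. exfalso. apply: hn => y ->.
  case: (classic (T 0)) => // h0. exfalso. exact: (center_empty h0 hx).
- move=> S uS eS T uT hT hn.
  case: (extremeA uS eS uT) => h.
  + case: (classic (incl S T)) => h2.
    * exact: center_mono.
    * move=> x /(eS T uT h h2) hx. exact: (sclo_incl (term_sclo uS)).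
  + by exfalso; apply: hn.
- move=> F uF IH T uT hT hn.
  have [S FS hS] : exists2 S, F S & ~ incl S T.
    apply: NNPP => hne; apply: hn => x [S FS Sx].
    apply: NNPP => hx; apply: hne; exists S => // h; exact: hx (h x Sx).
  case: (extremeA (uF S FS) (IH S FS) uT) => h.
  + move=> x /(IH S FS T uT h hS) hx; by exists S.
  + exfalso; apply: hS => x Sx; apply: h; exact: (sclo_incl (term_sclo (uF S FS))).
Qed.

Lemma term_chain S T : ust S -> ust T -> incl S T \/ incl T S.
Proof.
move=> uS uT. case: (extremeA uS (all_extreme uS) uT) => h; first by right.
left => x Sx; apply: h; exact: (sclo_incl (term_sclo uS)).
Qed.

Section SubG.
Variable S : V -> Prop.
Hypothesis hsub : subg S.
Hypothesis hscl : sclo S.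

Lemma subg0 x : S x -> S 0.
Proof. by move=> hx; rewrite -(subrr x); apply: hsub. Qed.

Lemma subgN x y : S x -> S y -> S (- y).
Proof. by move=> hx hy; rewrite -sub0r; apply: hsub => //; exact: subg0 hx. Qed.

Lemma subgD x y : S x -> S y -> S (x + y).
Proof. move=> hx hy. have hn : S (- y) by exact: (subgN hy hy).
by rewrite -(opprK y); apply: hsub. Qed.

Lemma subgMn x n : S x -> S (x *+ n).
Proof. move=> hx; elim: n => [|n IH]; first by rewrite mulr0n; exact: subg0 hx.
by rewrite mulrS; apply: subgD. Qed.

Lemma subgMz x k : S x -> S (x *~ k).
Proof. move=> hx; case: k => n; first by rewrite -pmulrn; apply: subgMn.
by rewrite NegzE mulrNz -pmulrn; apply: (subgN hx); apply: subgMn. Qed.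

Definition K1 a := forall g, S (st a g).

Lemma K1_S s : S s -> K1 s.
Proof. by move=> hs g; case: (hscl g hs). Qed.

Lemma K1_mul x y : K1 x -> K1 y -> K1 (mul x y).
Proof. by move=> hx hy g; rewrite stM; apply: subgD; [apply: subgD|]. Qed.

Lemma K1_inv x : K1 x -> K1 (inv x).
Proof.
move=> hx g. have h := stM (inv x) x g; rewrite bmulVl one0 st0l in h.
have -> : st (inv x) g = - (st (inv x) (st x g) + st x g).
  by apply/eqP; rewrite -addr_eq0 addrC -h.
have h1 : S (st (inv x) (st x g)) by case: (hscl (inv x) (hx g)).
by apply: (subgN h1); apply: subgD.
Qed.

Lemma K1_addS y s : K1 y -> S s -> K1 (y + s).
Proof.
move=> hy hs; rewrite sumE; apply: K1_mul => //; apply: K1_S.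
rewrite lamE; apply: subgD => //; by case: (hscl (inv y) hs).
Qed.

Lemma K1_add x y : K1 x -> K1 y -> K1 (x + y).
Proof.
move=> hx hy; rewrite sumE; apply: K1_mul => //; rewrite lamE.
by apply: K1_addS => //; apply: K1_inv.
Qed.

Lemma K1_opp x : K1 x -> K1 (- x).
Proof. by move=> hx; rewrite negE lamE; apply: K1_addS; [apply: K1_inv|]. Qed.

Lemma center_K1 x : center S x -> K1 x.
Proof. by move/centerE => h g; case: (h g). Qed.

Lemma center_subg : subg (center S).
Proof.
move=> x y /centerE hx /centerE hy; apply/centerE => g; split.
- by apply: K1_add; [|apply: K1_opp] => h; [case: (hx h)|case: (hy h)].
- rewrite stB; apply: hsub; [by case: (hx g)|by case: (hy g)].
Qed.

Lemma S_center x : S x -> center S x.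
Proof. exact: sclo_incl. Qed.

End SubG.

Lemma term_subg S : ust S -> subg S.
Proof.
elim => {S}.
- by move=> x y -> ->; rewrite subrr.
- move=> S uS IH; apply: center_subg => //; exact: term_sclo.
- move=> F uF IH x y [S1 F1 h1] [S2 F2 h2].
  case: (term_chain (uF S1 F1) (uF S2 F2)) => h.
  + by exists S2 => //; apply: (IH S2 F2) => //; apply: h.
  + by exists S1 => //; apply: (IH S1 F1) => //; apply: h.
Qed.

Local Notation Tor := (@finite_add_order V).
Definition cg (x y : V) := Tor (x - y).
Definition Q (x : V) := forall g, Tor (st x g) /\ Tor (st g x).

Lemma tor0 : Tor 0.
Proof. by exists 1%N => //; rewrite mulr1n. Qed.

Lemma torB x y : Tor x -> Tor y -> Tor (x - y).
Proof.
case=> n hn hx [m hm hy]; exists (n * m)%N; first by rewrite muln_gt0 hn hm.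
by rewrite mulrnBl mulrnA hx mul0rn mulnC mulrnA hy mul0rn subrr.
Qed.

Lemma tor_subg : subg Tor.
Proof. by move=> x y; apply: torB. Qed.

Lemma torN x : Tor x -> Tor (- x).
Proof. by move=> h; apply: (subgN tor_subg h h). Qed.

Lemma torD x y : Tor x -> Tor y -> Tor (x + y).
Proof. exact: (subgD tor_subg). Qed.

Lemma torMz x k : Tor x -> Tor (x *~ k).
Proof. exact: (subgMz tor_subg). Qed.

Lemma torMz_inv x k : k != 0 -> Tor (x *~ k) -> Tor x.
Proof.
case: k => m hk [n hn h].
- exists (m * n)%N; first by rewrite muln_gt0 hn andbT lt0n; move: hk; rewrite eqz_nat.
  by rewrite mulrnA pmulrn.
- exists (m.+1 * n)%N; first by rewrite muln_gt0 hn.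
  move: h; rewrite NegzE mulrNz -pmulrn mulNrn => /eqP; rewrite oppr_eq0 => /eqP.
  by rewrite mulrnA.
Qed.

Lemma cg_refl x : cg x x.
Proof. by rewrite /cg subrr; exact: tor0. Qed.

Lemma cg_sym x y : cg x y -> cg y x.
Proof. by rewrite /cg => h; rewrite -opprB; apply: torN. Qed.

Lemma cg_trans x y z : cg x y -> cg y z -> cg x z.
Proof. rewrite /cg => h1 h2. have -> : x - z = (x - y) + (y - z) by rewrite addrA subrK.
exact: torD. Qed.

Lemma cg_add x y x' y' : cg x x' -> cg y y' -> cg (x + y) (x' + y').
Proof. rewrite /cg => h1 h2. rewrite opprD addrACA. exact: torD. Qed.

Lemma cg_opp x y : cg x y -> cg (- x) (- y).
Proof. by rewrite /cg => h; rewrite -opprD; apply: torN. Qed.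

Lemma cg_mulz x y k : cg x y -> cg (x *~ k) (y *~ k).
Proof. by rewrite /cg => h; rewrite -mulrzBl; apply: torMz. Qed.

Lemma cg_tor x : Tor x -> cg x 0.
Proof. by rewrite /cg subr0. Qed.

Lemma tor_cg x y : cg x y -> Tor y -> Tor x.
Proof. rewrite /cg => h1 h2. rewrite -(subrK y x). exact: torD. Qed.

Lemma cg_drop2 a b c : Tor a -> Tor b -> cg (a + b + c) c.
Proof.
move=> ha hb. rewrite -[X in cg _ X]add0r. apply: cg_add; last exact: cg_refl.
rewrite -[X in cg _ X]add0r. by apply: cg_add; apply: cg_tor.
Qed.

Section Core.
Variable S : V -> Prop.
Hypothesis hsub : subg S.
Hypothesis hscl : sclo S.
Hypothesis SQ : forall x, S x -> Q x.
Hypothesis TB : T_brace B.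

Lemma SQ1 s g : S s -> Tor (st s g).
Proof. by move=> hs; case: (SQ hs g). Qed.
Lemma SQ2 s g : S s -> Tor (st g s).
Proof. by move=> hs; case: (SQ hs g). Qed.
Lemma sc1 s g : S s -> S (st s g).
Proof. by move=> hs; case: (hscl g hs). Qed.
Lemma sc2 s g : S s -> S (st g s).
Proof. by move=> hs; case: (hscl g hs). Qed.

Lemma L_s v s g : S s -> cg (st (v + s) g) (st v g).
Proof.
move=> hs. rewrite sumE stM.
have ht : S (lam (inv v) s) by rewrite lamE; apply: subgD => //; apply: sc2.
apply: cg_drop2; first by apply: SQ2; apply: sc1.
exact: SQ1.
Qed.

Lemma K1_subg : subg (K1 S).
Proof. by move=> x y hx hy; apply: K1_add => //; apply: K1_opp. Qed.

Lemma L_add u v g : K1 S u -> K1 S v -> cg (st (u + v) g) (st u g + st v g).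
Proof.
move=> hu hv. rewrite sumE stM lamE.
have hs : S (st (inv u) v) by apply: K1_inv.
have hy : K1 S (v + st (inv u) v) by apply: K1_addS.
rewrite -addrA [st u g + _]addrC. rewrite -[X in cg _ X]add0r.
apply: cg_add; first by apply: cg_tor; apply: SQ2.
apply: cg_add; last exact: cg_refl.
exact: L_s.
Qed.

Lemma L_opp v g : K1 S v -> cg (st (- v) g) (- st v g).
Proof.
move=> hv. have hn : K1 S (- v) by apply: K1_opp.
have h := L_add g hv hn. rewrite subrr st0l /cg sub0r in h.
by rewrite /cg opprK addrC; rewrite -[X in Tor X]opprK; apply: torN.
Qed.

Lemma L_muln u n g : K1 S u -> cg (st (u *+ n) g) (st u g *+ n).
Proof.
move=> hu; elim: n => [|n IH]; first by rewrite !mulr0n st0l; exact: cg_refl.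
rewrite !mulrS. apply: cg_trans (L_add g hu _) _; first exact: (subgMn K1_subg).
by apply: cg_add => //; exact: cg_refl.
Qed.

Lemma L_mulz u k g : K1 S u -> cg (st (u *~ k) g) (st u g *~ k).
Proof.
move=> hu; case: k => n; first by rewrite -!pmulrn; apply: L_muln.
rewrite NegzE !mulrNz -!pmulrn. apply: cg_trans (L_opp g _) _.
  exact: (subgMn K1_subg).
by apply: cg_opp; apply: L_muln.
Qed.

Section Elt.
Variable x : V.
Hypothesis hx : center S x.
Let e := st x x.
Let hK x' : center S x' -> K1 S x'. Proof. exact: center_K1. Qed.
Let cS : subg (center S). Proof. exact: center_subg. Qed.
Let he : S e. Proof. have /centerE h := hx. by case: (h x). Qed.
Let S0 : S 0. Proof. exact: (subg0 hsub he). Qed.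

Definition Jx z := exists k s, S s /\ z = x *~ k + s.
Definition Ix z := exists k m w, (S w /\ Tor w) /\ z = x *~ k + e *~ m + w.

Lemma iden2 (p q r t : V) : (p + q) - (r + t) = (p - r) + (q - t).
Proof. by rewrite opprD addrACA. Qed.

Lemma iden3 (a b c a' b' c' : V) : (a + b + c) - (a' + b' + c') = (a - a') + (b - b') + (c - c').
Proof. by rewrite !iden2. Qed.

Lemma Jx_subg : subg Jx.
Proof.
move=> z1 z2 [k [s [hs ->]]] [k1 [s1 [hs1 ->]]]. exists (k - k1), (s - s1); split; first exact: hsub.
by rewrite mulrzBr iden2.
Qed.

Lemma Jx_S s : S s -> Jx s.
Proof. by move=> hs; exists 0, s; rewrite mulr0z add0r. Qed.

Lemma Jx_center z : Jx z -> center S z.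
Proof.
case=> k [s [hs ->]]. apply: (subgD cS); first exact: (subgMz cS).
exact: S_center.
Qed.

Lemma Jx_mul a b : Jx a -> Jx b -> Jx (bmul B a b).
Proof.
move=> ha hb. rewrite mulEs. apply: (subgD Jx_subg); first exact: (subgD Jx_subg).
apply: Jx_S. exact: (hK (Jx_center ha)).
Qed.

Lemma Jx_inv a : Jx a -> Jx (inv a).
Proof.
move=> ha. rewrite invE. apply: Jx_subg; first exact: (subgN Jx_subg ha).
apply: Jx_S. exact: (hK (Jx_center ha)).
Qed.

Lemma Jx_ideal : is_ideal B Jx.
Proof.
split.
- split.
  + exact: Jx_S.
  + exact: Jx_subg.
  + by rewrite one0; exact: Jx_S.
  + exact: Jx_mul.
  + exact: Jx_inv.
- by [].
- move=> a z _ hz. have /centerE h := Jx_center hz. case: (h a) => h1 h2.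
  by rewrite -!stU; split; apply: Jx_S.
Qed.

Lemma KL j : Jx j -> exists m w, (S w /\ Tor w) /\ st j x = e *~ m + w.
Proof.
move=> hj. have hj' := hj. case: hj' => k [s [hs ej]].
exists k, (st j x - e *~ k); split; last by rewrite addrC subrK.
split.
- apply: hsub; first exact: (hK (Jx_center hj)).
  exact: (subgMz hsub).
- rewrite ej. apply: cg_trans (L_s _ _ hs) _. apply: L_mulz. exact: hK.
Qed.

Lemma Ix_subg : subg Ix.
Proof.
move=> _ _ [k [m [w [[hw tw] ->]]]] [k' [m' [w' [[hw' tw'] ->]]]].
exists (k - k'), (m - m'), (w - w'); split; first by split; [apply: hsub|apply: torB].
by rewrite iden3 !mulrzBr.
Qed.

Lemma Ix_W w : S w -> Tor w -> Ix w.
Proof. by move=> hw tw; exists 0, 0, w; split => //; rewrite !mulr0z !add0r. Qed.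

Lemma Ix_e m : Ix (e *~ m).
Proof. by exists 0, m, 0; split; [split; [exact: S0|exact: tor0]|rewrite mulr0z add0r addr0]. Qed.

Lemma Ix_x : Ix x.
Proof. by exists 1, 0, 0; split; [split; [exact: S0|exact: tor0]|rewrite mulr1z mulr0z !addr0]. Qed.

Lemma Ix_J z : Ix z -> Jx z.
Proof.
case=> k [m [w [[hw tw] ->]]]. exists k, (e *~ m + w); split; last by rewrite addrA.
apply: (subgD hsub) => //; exact: (subgMz hsub).
Qed.

Lemma KL_I j : Jx j -> Ix (st j x).
Proof.
move=> /KL [m [w [[hw tw] ->]]]. apply: (subgD Ix_subg); first exact: Ix_e.
exact: Ix_W.
Qed.

Lemma IL j i : Jx j -> Ix i -> Ix (st j i) /\ Ix (st i j).
Proof.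
move=> hj hi; split.
- case: hi => k [m [w [[hw tw] ->]]]. rewrite !stD !stMz.
  apply: (subgD Ix_subg); first apply: (subgD Ix_subg).
  + apply: (subgMz Ix_subg); exact: KL_I.
  + apply: (subgMz Ix_subg); apply: Ix_W; [exact: sc2|exact: SQ2].
  + apply: Ix_W; [exact: sc2|exact: SQ2].
- case: hj => k [s [hs ->]]. rewrite stD stMz.
  apply: (subgD Ix_subg).
  + apply: (subgMz Ix_subg); apply: KL_I; exact: Ix_J.
  + apply: Ix_W; [exact: sc2|exact: SQ2].
Qed.

Lemma Ix_ideal_of : is_ideal_of B Jx Ix.
Proof.
split.
- split.
  + exact: (subg0 Ix_subg Ix_x).
  + exact: Ix_subg.
  + by rewrite one0; exact: (subg0 Ix_subg Ix_x).
  + move=> a b ha hb. rewrite mulEs. apply: (subgD Ix_subg); first exact: (subgD Ix_subg).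
    by case: (IL (Ix_J hb) ha).
  + move=> a ha. rewrite invE. apply: Ix_subg; first exact: (subgN Ix_subg ha).
    by case: (IL (Jx_inv (Ix_J ha)) ha).
- exact: Ix_J.
- move=> a z ha hz. rewrite -!stU. exact: IL.
Qed.

Lemma IxP g : Ix (st g x) /\ Ix (st x g).
Proof.
have [_ _ h] := TB Ix_ideal_of Jx_ideal. rewrite !stU. exact: (h g x I Ix_x).
Qed.

End Elt.

Lemma center_Q a : center S a -> Q a.
Proof.
move=> ha. have hKa := center_K1 ha. have cS := center_subg hsub hscl.
have hd : S (st a a) by apply: hKa.
have td : Tor (st a a).
  have h2 : center S (a *~ 2) := subgMz cS 2 ha.
  have he' : S (st (a *~ 2) (a *~ 2)) by apply: (center_K1 h2).
  case: (IxP h2 a) => [[k [m [w [[hw tw] E]]]] _].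
  rewrite [LHS]stMz in E.
  have T1 : Tor (st a (st a a *~ 2)) by rewrite stMz; apply: torMz; apply: SQ2.
  have ce : cg (st (a *~ 2) (a *~ 2)) (st a a *~ 2 *~ 2).
    rewrite stMz. apply: cg_mulz. exact: L_mulz.
  move: he' E ce. set e' := st (a *~ 2) (a *~ 2). clearbody e' => he' E ce.
  rewrite E !stD !stMz in T1.
  have := torB (torB T1 (SQ2 a hw)) (torMz m (SQ2 a he')). rewrite !addrK => T2.
  case: (eqVneq k 0) => hk.
  - subst k. rewrite mulr0z add0r in E.
    have T3 : Tor (e' *~ m + w - st a a *~ 2 *~ 2 *~ m).
      have -> : e' *~ m + w - st a a *~ 2 *~ 2 *~ m
              = (e' - st a a *~ 2 *~ 2) *~ m + w by rewrite mulrzBl addrAC.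
      by apply: torD => //; apply: torMz.
    rewrite -E -!mulrzA -mulrzBr in T3.
    apply: torMz_inv _ T3. apply/eqP. lia.
  - apply: (@torMz_inv _ 2) => //. exact: torMz_inv hk T2.
move=> g; split.
- case: (IxP ha g) => _ [k [m [w [[hw tw] E]]]].
  have hs : S (st a a *~ m + w) by apply: (subgD hsub) => //; apply: (subgMz hsub).
  have c1 : cg (st (a *~ k + st a a *~ m + w) g) (st a g *~ k).
    rewrite -addrA. apply: cg_trans (L_s _ _ hs) _. exact: L_mulz.
  rewrite -E in c1.
  have T2 : Tor (st a g *~ k) := tor_cg (cg_sym c1) (SQ1 g (hKa g)).
  case: (eqVneq k 0) => hk.
  + subst k. rewrite E mulr0z add0r. apply: torD => //. exact: torMz.
  + exact: torMz_inv hk T2.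
- case: (IxP ha g) => [[k [m [w [[hw tw] E]]]] _].
  have hga : S (st g a) by have /centerE h := ha; case: (h g).
  have E2 : st g (a *~ k + st a a *~ m + w) = st g a *~ k + st g (st a a) *~ m + st g w.
    by rewrite !stD !stMz.
  rewrite -E in E2.
  have T1 := SQ2 g hga. rewrite E2 in T1.
  have := torB (torB T1 (SQ2 g hw)) (torMz m (SQ2 g hd)). rewrite !addrK => T2.
  case: (eqVneq k 0) => hk.
  + subst k. rewrite E mulr0z add0r. apply: torD => //. exact: torMz.
  + exact: torMz_inv hk T2.
Qed.

End Core.

Lemma term_Q S : T_brace B -> ust S -> forall x, S x -> Q x.
Proof.
move=> TB; elim => {S}.
- by move=> x -> g; rewrite st0l st0r; split; exact: tor0.
- move=> S uS IH x hx. exact: (center_Q (term_subg uS) (term_sclo uS) IH TB hx).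
- move=> F uF IH x [S FS Sx]. exact: (IH S FS x Sx).
Qed.

End Basic.

Theorem lemma4p1 (V : zmodType) (B : brace V) :
  T_brace B ->
  (star_hypercentral B ->
     forall x, in_star_star B x -> finite_add_order x) /\
  (forall Z : V -> Prop, upper_star_term B Z ->
     forall a b, Z a -> Z b -> finite_add_order (bstar B a b)).
Proof.
move=> TB; split.
- case=> S uS hall x; elim => {x}.
  + move=> x y. rewrite -stU. by case: (term_Q TB uS (hall x) y).
  + exact: tor0.
  + by move=> u v _ hu _ hv; apply: torB.
- move=> Z uZ a b ha hb. rewrite -stU. by case: (term_Q TB uZ ha b).
Qed.
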